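(* Let $p$ be a prime, $n\ge1$, $s\ge0$ integers, and $f:\mathbb{F}_{p^n}\to\mathbb{F}_p$. Let $M=(m_{x,y})_{x,y\in\mathbb{F}_{p^n}}$ be the $p^n\times p^n$ matrix with $m_{x,y}=\zeta_p^{f(x+y)}$. Then $f$ is $s$-plateaued if and only if $MM^*M=p^{n+s}M$, where $M^*$ is the conjugate transpose of $M$.
   Context: $\zeta_p=e^{2\pi i/p}$, $Tr_n(z)=\sum_{i=0}^{n-1}z^{p^i}$. The Walsh transform is $\widehat f(\mu)=\sum_{x\in\mathbb{F}_{p^n}}\zeta_p^{f(x)-Tr_n(\mu x)}$. $f$ is $s$-plateaued if $|\widehat f(\mu)|\in\{0,p^{(n+s)/2}\}$ for all $\mu\in\mathbb{F}_{p^n}$. *)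

(* Defs.v *)
From HB Require Import structures.
From mathcomp Require Import all_boot all_order all_algebra all_field.
Set Implicit Arguments. Unset Strict Implicit. Unset Printing Implicit Defensive.
Import Order.TTheory GRing.Theory Num.Theory.
Local Open Scope ring_scope.

(* zeta_p = exp(2 pi i / p): p.-root (-1) is exp(i pi / p) (the root of -1 of
   minimal non-negative argument), so its square is exp(2 pi i / p). *)
Definition zeta (p : nat) : algC := (p.-root (-1)) ^+ 2.

Definition Tr (F : finFieldType) (p n : nat) (z : F) : F :=
  \sum_(i < n) z ^+ (p ^ i).

(* The natural number k < p with k%:R = a, for a in the prime subfield of F
   (default 0, never used for values of the trace). *)
Definition prime_val (F : finFieldType) (p : nat) (a : F) : nat :=
  if [pick i : 'I_p | (nat_of_ord i)%:R == a] is Some i then nat_of_ord i else 0%N.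

Definition walsh (F : finFieldType) (p n : nat) (f : F -> 'F_p) (mu : F) : algC :=
  \sum_(x : F)
     zeta p ^+ (nat_of_ord (f x - ((prime_val p (Tr p n (mu * x)))%:R : 'F_p))).

Definition plateaued (F : finFieldType) (p n s : nat) (f : F -> 'F_p) : Prop :=
  forall mu : F, `|walsh n f mu| = 0 \/ `|walsh n f mu| = sqrtC ((p ^ (n + s))%:R).

Definition Mf (F : finFieldType) (p : nat) (f : F -> 'F_p) : 'M[algC]_#|F| :=
  \matrix_(i, j) zeta p ^+ (nat_of_ord (f (enum_val i + enum_val j))).

Definition conjT (m : nat) (A : 'M[algC]_m) : 'M[algC]_m := (map_mx (fun z : algC => z^*) A)^T.

(* Main.v *)
Require Import Defs.
From HB Require Import structures.
From mathcomp Require Import all_boot all_order all_algebra all_field.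
Set Implicit Arguments. Unset Strict Implicit. Unset Printing Implicit Defensive.
Import Order.TTheory GRing.Theory Num.Theory.
Local Open Scope ring_scope.

Lemma zeta_prim p : prime p -> p.-primitive_root (zeta p).
Proof.
move=> pp; have p1 := prime_gt1 pp; have p0 := prime_gt0 pp.
have rp : (p.-root (-1 : algC)) ^+ p = -1 by rewrite rootCK.
have zp : zeta p ^+ p = 1 by rewrite /zeta -exprM mulnC exprM rp sqrrN expr1n.
have [m pm mp] := prim_order_exists p0 zp.
move: pm; case/primeP: (pp) => _ /(_ m mp)/orP[/eqP m1|/eqP->//].
rewrite m1 => /prim_expr_order; rewrite expr1 /zeta => /eqP.
rewrite sqrf_eq1 => /orP[/eqP r1|/eqP r1].
  move: rp; rewrite r1 expr1n => /eqP; rewrite -subr_eq0 opprK.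
  by rewrite (_ : 1 + 1 = 2%:R) // pnatr_eq0.
have : p.-root (-1 : algC) < 0 by rewrite r1 ltrN10.
by rewrite rootC_lt0.
Qed.
Section Zp.
Variables (p : nat).
Hypothesis pp : prime p.

Definition Z (a : 'F_p) : algC := zeta p ^+ a.

Lemma Fp_natE (a : 'F_p) : ((nat_of_ord a)%:R : 'F_p) = a.
Proof. exact: natr_Zp. Qed.

Lemma Z_nat k : Z (k%:R) = zeta p ^+ k.
Proof. by rewrite /Z val_Fp_nat // (prim_expr_mod (zeta_prim pp)). Qed.

Lemma ZD a b : Z (a + b) = Z a * Z b.
Proof. by rewrite -[a]Fp_natE -[b]Fp_natE -natrD !Z_nat exprD. Qed.

Lemma Z0 : Z 0 = 1.
Proof. by rewrite /Z expr0. Qed.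

Lemma ZN a : Z (- a) * Z a = 1.
Proof. by rewrite -ZD addNr Z0. Qed.

Lemma Z_norm a : `|Z a| = 1.
Proof.
apply/eqP; rewrite -(pexpr_eq1 (prime_gt0 pp)) // -normrX /Z -exprM mulnC exprM.
by rewrite (prim_expr_order (zeta_prim pp)) expr1n normr1.
Qed.

Lemma Z_conj a : (Z a)^* = Z (- a).
Proof.
have h : Z a * (Z a)^* = 1 by rewrite -normCK Z_norm expr1n.
have nz : Z a != 0 by rewrite -normr_eq0 Z_norm oner_eq0.
by apply: (mulfI nz); rewrite h mulrC ZN.
Qed.

Lemma Z_eq1 a : (Z a == 1) = (a == 0).
Proof.
rewrite /Z -(prim_order_dvd (zeta_prim pp)).
apply/idP/eqP => [d|->//]; apply/val_inj => /=.
have ap : (nat_of_ord a < p)%N.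
  by rewrite -(Fp_natE a) val_Fp_nat // ltn_mod prime_gt0.
case: (posnP a) => // pos; have := dvdn_leq pos d.
by rewrite leqNgt ap.
Qed.
End Zp.

Section Fld.
Variables (p n : nat) (F : finFieldType).
Hypotheses (pp : prime p) (n0 : (0 < n)%N) (cF : #|F| = (p ^ n)%N).

Let chF : p \in [pchar F] := card_finPcharP cF pp.

Lemma pnatX i : [pchar F].-nat (p ^ i)%N.
Proof. by rewrite (eq_pnat _ (pcharf_eq chF)) pnatX pnat_id. Qed.

Lemma TrD (a b : F) : Tr p n (a + b) = Tr p n a + Tr p n b.
Proof.
rewrite /Tr -big_split /=; apply: eq_bigr => i _; exact: exprDn_pchar (pnatX i).
Qed.

Lemma TrX (z : F) : Tr p n z ^+ p = Tr p n z.
Proof.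
have -> : Tr p n z ^+ p = \sum_(i < n) z ^+ (p ^ i.+1).
  rewrite /Tr -(pFrobenius_autE chF) rmorph_sum; apply: eq_bigr => i _.
  by rewrite /= pFrobenius_autE expnSr exprM.
have [m nm] : exists m, n = m.+1 by case: n n0 => // m; exists m.
rewrite /Tr nm big_ord_recr big_ord_recl /= addrC; congr (_ + _).
by rewrite -nm -cF expf_card expn0 expr1.
Qed.

Lemma natF_inj i j : (i < p)%N -> (j < p)%N -> i%:R = j%:R :> F -> i = j.
Proof.
wlog ij : i j / (i <= j)%N.
  move=> W ip jp e; case/orP: (leq_total i j) => h; first exact: W.
  by symmetry; apply: W.
move=> ip jp /eqP; rewrite eq_sym -subr_eq0 -natrB // -(dvdn_pcharf chF) => d.
case: (posnP (j - i)) => [/eqP|pos].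
  by rewrite subn_eq0 => ji; apply/eqP; rewrite eqn_leq ij ji.
by have := dvdn_leq pos d; rewrite leqNgt (leq_ltn_trans (leq_subr i j) jp).
Qed.

Lemma subfield_nat (t : F) : t ^+ p = t -> exists2 k, (k < p)%N & k%:R = t.
Proof.
move=> tp; have p1 := prime_gt1 pp.
set s := [seq (k%:R : F) | k <- iota 0 p].
have [/mapP [k] | nts] := boolP (t \in s).
  by rewrite mem_iota add0n => /andP [_ kp] ->; exists k.
pose P : {poly F} := 'X^p - 'X.
have sP : size P = p.+1.
  by rewrite /P size_addl size_polyXn // size_opp size_polyX ltnS.
have P0 : P != 0 by rewrite -size_poly_eq0 sP.
have := max_poly_roots P0 (rs := t :: s).
rewrite /= sP size_map size_iota ltnn nts map_inj_in_uniq ?iota_uniq /=; last first.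
  move=> i j; rewrite !mem_iota !add0n => /andP[_ ip] /andP[_ jp].
  exact: natF_inj.
rewrite /root /P !hornerE tp subrr eqxx /= => H; suff : false by []; apply: H => //.
apply/allP => _ /mapP [k _ ->]; rewrite !hornerE -(pFrobenius_autE chF).
by rewrite pFrobenius_aut_nat subrr.
Qed.

Lemma prime_valP (t : F) : t ^+ p = t ->
  (prime_val p t < p)%N /\ (prime_val p t)%:R = t.
Proof.
move=> /subfield_nat [k kp kt]; rewrite /prime_val.
case: pickP => [i /eqP it | /(_ (Ordinal kp)) /=]; last by rewrite kt eqxx.
by split.
Qed.


Definition phi (a : 'F_p) : F := (nat_of_ord a)%:R.
Definition trp (z : F) : 'F_p := (prime_val p (Tr p n z))%:R.
Definition chi (z : F) : algC := Z (trp z).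

Lemma phi_nat k : phi (k%:R) = k%:R.
Proof. by rewrite /phi val_Fp_nat // (GRing.natr_mod_pchar chF). Qed.

Lemma phi_trp z : phi (trp z) = Tr p n z.
Proof. by rewrite phi_nat; case: (prime_valP (TrX z)). Qed.

Lemma phi_inj : injective phi.
Proof.
have lt (a : 'F_p) : (nat_of_ord a < p)%N.
  by rewrite -(Fp_natE a) val_Fp_nat // ltn_mod prime_gt0.
by move=> a b /natF_inj h; apply/val_inj/h.
Qed.

Lemma phiD a b : phi (a + b) = phi a + phi b.
Proof. by rewrite -[a]Fp_natE -[b]Fp_natE -natrD !phi_nat natrD. Qed.

Lemma trpD a b : trp (a + b) = trp a + trp b.
Proof. by apply: phi_inj; rewrite phiD !phi_trp TrD. Qed.

Lemma trp0 : trp 0 = 0.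
Proof. by apply: (addrI (trp 0)); rewrite -trpD !addr0. Qed.

Lemma trpN a : trp (- a) = - trp a.
Proof. by apply: (addIr (trp a)); rewrite -trpD !addNr trp0. Qed.

Lemma chiD a b : chi (a + b) = chi a * chi b.
Proof. by rewrite /chi trpD ZD. Qed.

Lemma chi0 : chi 0 = 1.
Proof. by rewrite /chi trp0 Z0. Qed.

Lemma chi_conj a : (chi a)^* = chi (- a).
Proof. by rewrite /chi trpN Z_conj. Qed.

Lemma chi_eq1 a : (chi a == 1) = (Tr p n a == 0).
Proof.
rewrite /chi Z_eq1 // -phi_trp; apply/eqP/eqP => [->|h]; first by rewrite /phi.
by apply: phi_inj; rewrite h /phi.
Qed.

Lemma Tr_nz : exists y : F, Tr p n y != 0.
Proof.
have p1 := prime_gt1 pp; have p0 := prime_gt0 pp.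
have [m nm] : exists m, n = m.+1 by case: n n0 => // m; exists m.
case: (boolP [exists y : F, Tr p n y != 0]) => [/existsP[y hy]|/existsPn h]; first by exists y.
exfalso.
pose P : {poly F} := \sum_(i < n) 'X^(p ^ i).
have PE y : P.[y] = Tr p n y by rewrite /P horner_sum; apply: eq_bigr => i _; rewrite hornerXn.
have P0 : P != 0.
  apply/negP => /eqP Pz; move: (congr1 (fun q : {poly F} => q`_(p ^ m)%N) Pz).
  rewrite coef0 /P coef_sum nm (bigD1 ord_max) //= coefXn eqxx big1 ?addr0.
    by move/eqP; rewrite oner_eq0.
  move=> i /eqP ni; rewrite coefXn eqn_exp2l //.
  by case: eqP => // im; case: ni; apply: val_inj; rewrite /= -im.
have sP : (size P <= (p ^ m).+1)%N.
  apply: leq_trans (size_sum _ _ _) _; apply/bigmax_leqP => i _.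
  by rewrite size_polyXn ltnS leq_pexp2l // -ltnS -nm.
have := max_poly_roots P0 (rs := enum F).
rewrite enum_uniq.
have -> : all (root P) (enum F) by apply/allP => y _; rewrite /root PE; move: (h y); rewrite negbK.
move/(_ isT isT) => /leq_trans /(_ sP); rewrite -cardE cF nm ltnS expnS.
rewrite leqNgt; move/negP; apply.
have pm : (0 < p ^ m)%N by rewrite expn_gt0 p0.
by rewrite -[X in (X < _)%N]mul1n ltn_pmul2r.
Qed.

Lemma sum_chi (t : F) : \sum_(x : F) chi (t * x) = if t == 0 then #|F|%:R else 0.
Proof.
case: eqP => [->|/eqP t0].
  rewrite (eq_bigr (fun _ => 1)); last by move=> x _; rewrite mul0r chi0.
  by rewrite sumr_const.
have [y hy] := Tr_nz.
set x0 := t^-1 * y.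
have c1 : chi (t * x0) != 1 by rewrite /x0 mulrA divff // mul1r chi_eq1.
set S := \sum_x _.
have : S = chi (t * x0) * S.
  rewrite /S mulr_sumr [in LHS](reindex_inj (addIr x0)) /=; apply: eq_bigr => x _.
  by rewrite mulrDr chiD [RHS]mulrC.
move/eqP; rewrite -subr_eq0 -{1}[S]mul1r -mulrBl mulf_eq0 subr_eq0 eq_sym (negbTE c1) /=.
by move/eqP.
Qed.

Variable f : F -> 'F_p.
Definition e (x : F) : algC := Z (f x).
Definition A (mu : F) : algC := \sum_x e x * chi (mu * x).
Definition G (x y : F) : algC := \sum_v (\sum_u e (x + u) * (e (v + u))^* ) * e (v + y).
Definition act (K : F -> F -> algC) x mu := \sum_y K x y * chi (mu * y).

Lemma sumI (g : F -> algC) : \sum_(i < #|F|) g (enum_val i) = \sum_x g x.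
Proof. by rewrite (big_enum_val g). Qed.

Lemma E1 x mu : \sum_y e (x + y) * chi (mu * y) = A mu * chi (- (mu * x)).
Proof.
rewrite (reindex_inj (addIr (- x))) /A mulr_suml; apply: eq_bigr => z _.
by rewrite addrC addrNK mulrDr mulrN chiD mulrA.
Qed.

Lemma E2 x mu : \sum_y (e (x + y))^* * chi (- (mu * y)) = (A mu)^* * chi (mu * x).
Proof.
have := congr1 (fun z => z^* ) (E1 x mu); rewrite /= rmorphM /= chi_conj opprK => <-.
rewrite rmorph_sum; apply: eq_bigr => y _; by rewrite rmorphM /= chi_conj.
Qed.

Lemma actG x mu : act G x mu = A mu * (A mu)^* * A mu * chi (- (mu * x)).
Proof.
pose S v := \sum_u e (x + u) * (e (v + u))^*.
have step1 : act G x mu = \sum_v S v * (A mu * chi (- (mu * v))).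
  transitivity (\sum_y \sum_v S v * (e (v + y) * chi (mu * y))).
    apply: eq_bigr => y _; rewrite mulr_suml; apply: eq_bigr => v _; by rewrite mulrA.
  rewrite exchange_big; apply: eq_bigr => v _; by rewrite -mulr_sumr E1.
have step2 : \sum_v S v * (A mu * chi (- (mu * v)))
    = A mu * \sum_u e (x + u) * ((A mu)^* * chi (mu * u)).
  transitivity (A mu * \sum_v \sum_u e (x + u) * ((e (u + v))^* * chi (- (mu * v)))).
    rewrite mulr_sumr; apply: eq_bigr => v _; rewrite /S mulr_suml mulr_sumr.
    apply: eq_bigr => u _; rewrite (addrC u v); by rewrite mulrCA !mulrA.
  rewrite exchange_big; congr (_ * _); apply: eq_bigr => u _; by rewrite -mulr_sumr E2.
rewrite step1 step2.
transitivity (A mu * (A mu)^* * \sum_u e (x + u) * chi (mu * u)).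
  rewrite -mulrA; congr (_ * _); rewrite mulr_sumr; apply: eq_bigr => u _.
  by rewrite mulrCA.
by rewrite E1 mulrA.
Qed.

Lemma uniq_act K x y0 :
  K x y0 = (#|F|%:R)^-1 * \sum_mu act K x mu * chi (- (mu * y0)).
Proof.
have q0 : (#|F|%:R : algC) != 0 by rewrite pnatr_eq0 cF -lt0n expn_gt0 prime_gt0.
transitivity ((#|F|%:R)^-1 * \sum_y K x y * \sum_mu chi ((y - y0) * mu)).
  under eq_bigr do rewrite sum_chi subr_eq0.
  rewrite (bigD1 y0) //= eqxx big1 ?addr0; first by rewrite mulrC mulfK.
  by move=> y /negbTE ->; rewrite mulr0.
congr (_ * _); rewrite /act.
transitivity (\sum_y \sum_mu K x y * (chi (mu * y) * chi (- (mu * y0)))).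
  apply: eq_bigr => y _; rewrite mulr_sumr; apply: eq_bigr => mu _.
  by rewrite -chiD mulrBl [y * _]mulrC [y0 * _]mulrC.
rewrite exchange_big; apply: eq_bigr => mu _; rewrite mulr_suml.
by apply: eq_bigr => y _; rewrite mulrA.
Qed.

Lemma walshA mu : walsh n f mu = A (- mu).
Proof.
rewrite /walsh /A; apply: eq_bigr => x _.
rewrite mulNr /chi trpN /e -ZD.
  reflexivity. by [].
Qed.

Lemma MfE i j : Mf f i j = e (enum_val i + enum_val j).
Proof. by rewrite mxE. Qed.

Lemma prodE i j : (Mf f *m conjT (Mf f) *m Mf f) i j = G (enum_val i) (enum_val j).
Proof.
rewrite mxE /G -(sumI (fun v => (\sum_u e (enum_val i + u) * (e (v + u))^* ) * e (v + enum_val j))).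
apply: eq_bigr => k _; rewrite mxE MfE -sumI; congr (_ * _).
by apply: eq_bigr => l _; rewrite !mxE.
Qed.

Lemma mat_iff c : (Mf f *m conjT (Mf f) *m Mf f = c *: Mf f) <->
  (forall x y, G x y = c * e (x + y)).
Proof.
split=> [h x y | h].
  move/matrixP: h => /(_ (enum_rank x) (enum_rank y)) h.
  by move: h; rewrite prodE !mxE !enum_rankK.
by apply/matrixP => i j; rewrite prodE h !mxE.
Qed.

Lemma G_iff c : (forall x y, G x y = c * e (x + y)) <->
  (forall mu, A mu * (A mu)^* * A mu = c * A mu).
Proof.
have actL x mu : act (fun x y => c * e (x + y)) x mu = c * (A mu * chi (- (mu * x))).
  by rewrite /act -E1 mulr_sumr; apply: eq_bigr => y _; rewrite mulrA.
split=> [h mu | h x y].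
  have : act G 0 mu = act (fun x y => c * e (x + y)) 0 mu by apply: eq_bigr => y _; rewrite h.
  by rewrite /= actG actL mulr0 oppr0 chi0 !mulr1.
rewrite (uniq_act G) (uniq_act (fun x y => c * e (x + y))); congr (_ * _).
by apply: eq_bigr => mu _; rewrite actG actL h mulrA.
Qed.
End Fld.

Lemma plat_pt (a c : algC) : 0 <= c ->
  (`|a| = 0 \/ `|a| = sqrtC c) <-> a * a^* * a = c * a.
Proof.
move=> c0; rewrite -normCK; split.
  case=> [/eqP|->]; first by rewrite normr_eq0 => /eqP ->; rewrite !mulr0.
  by rewrite sqrtCK.
have [->|a0] := eqVneq a 0; first by left; rewrite normr0.
move/(mulIf a0) => h; right; by rewrite -h sqrCK.
Qed.

Unset Implicit Arguments.

Theorem mainTheorem7 (p n s : nat) (F : finFieldType) (f : F -> 'F_p) :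
  prime p -> (0 < n)%N -> #|F| = (p ^ n)%N ->
  (plateaued n s f <->
   Mf f *m conjT (Mf f) *m Mf f = ((p ^ (n + s))%:R : algC) *: Mf f).
Proof.
move=> pp n0 cF.
have c0 : 0 <= ((p ^ (n + s))%:R : algC) by rewrite ler0n.
apply: (iff_trans _ (iff_sym (mat_iff _ _))).
apply: (iff_trans _ (iff_sym (G_iff pp n0 cF _ _))); split=> h mu.
  by apply/(plat_pt _ c0); have := h (- mu); rewrite (walshA pp n0 cF) opprK.
by rewrite (walshA pp n0 cF); apply/(plat_pt _ c0).
Qed.
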